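(* Let $H$ be a hypergraph on $V=[n]$. Then $H$ is $r$-cross-free if and only if $\mathrm{cl}_r(H)$ is $r$-cross-free.
   Context: Hypergraphs on $V$ are identified with their hyperedge sets. $\mathcal K_r(n)$ is the class of hypergraphs $\mathcal E$ on $V$ satisfying: (R0) every $X\subseteq V$ with $|X|\le r$ is in $\mathcal E$; (R1) $A\in\mathcal E\Rightarrow V\setminus A\in\mathcal E$; (R2) $A,B\in\mathcal E$ and $|A\cap B|\ge r\Rightarrow A\cup B\in\mathcal E$. $\mathcal K^0_r(n)$ is the class satisfying (R0) and (R1) only. $\mathrm{cl}_r(H)$ (resp. $\mathrm{cl}^0_r(H)$) is the intersection of all hypergraphs in $\mathcal K_r(n)$ (resp. $\mathcal K^0_r(n)$) containing $H$. $A,B\subseteq V$ are $r$-orthogonal if $\mathrm{cl}_r(\{A,B\})=\mathrm{cl}^0_r(\{A,B\})$. $H$ is $r$-cross-free if every pair of its hyperedges is $r$-orthogonal. *)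

(* Defs.v *)
From mathcomp Require Import all_boot.
Set Implicit Arguments. Unset Strict Implicit. Unset Printing Implicit Defensive.

Section Hyper.
Variables (n r : nat).
Notation hyp := {set {set 'I_n}}.

Definition R0 (E : hyp) : bool := [forall X : {set 'I_n}, (#|X| <= r) ==> (X \in E)].
Definition R1 (E : hyp) : bool := [forall A : {set 'I_n}, (A \in E) ==> (~: A \in E)].
Definition R2 (E : hyp) : bool :=
  [forall A : {set 'I_n}, forall B : {set 'I_n},
     [&& A \in E, B \in E & r <= #|A :&: B|] ==> (A :|: B \in E)].

Definition in_K (E : hyp) : bool := [&& R0 E, R1 E & R2 E].
Definition in_K0 (E : hyp) : bool := R0 E && R1 E.

Definition cl (H : hyp) : hyp :=
  [set X | [forall E : hyp, (in_K E && (H \subset E)) ==> (X \in E)]].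
Definition cl0 (H : hyp) : hyp :=
  [set X | [forall E : hyp, (in_K0 E && (H \subset E)) ==> (X \in E)]].

Definition orthogonal (A B : {set 'I_n}) : Prop := cl [set A; B] = cl0 [set A; B].

Definition cross_free (H : hyp) : Prop :=
  forall A B, A \in H -> B \in H -> orthogonal A B.
End Hyper.

(* Main.v *)
Require Import Defs.
From mathcomp Require Import all_boot.
Set Implicit Arguments. Unset Strict Implicit. Unset Printing Implicit Defensive.

Section Aux.
Variables (n r : nat).
Notation hyp := {set {set 'I_n}}.
Definition sm (X : {set 'I_n}) := #|X| <= r.
Definition G (S : hyp) : hyp := [set Z | [|| sm Z, sm (~: Z), Z \in S | ~: Z \in S]].
Definition gm (X Z : {set 'I_n}) := [|| sm Z, sm (~: Z), Z == X | ~: Z == X].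

Lemma G_K0 (S : hyp) : in_K0 r (G S).
Proof.
apply/andP; split.
- apply/forallP => X; apply/implyP => h; by rewrite inE /sm h.
- apply/forallP => X; apply/implyP; rewrite !inE setCK.
  by case: (sm X); case: (sm (~: X)); case: (X \in S); case: (~: X \in S).
Qed.

Lemma sub_G (S : hyp) : S \subset G S.
Proof. by apply/subsetP => X XS; rewrite inE XS !orbT. Qed.

Lemma G_min (S : hyp) E : in_K0 r E -> S \subset E -> G S \subset E.
Proof.
move=> /andP [/forallP R0E /forallP R1E] /subsetP sSE; apply/subsetP => Z.
rewrite inE => /or4P [h|h|h|h].
- exact: (implyP (R0E Z) h).
- rewrite -(setCK Z); exact: (implyP (R1E _) (implyP (R0E _) h)).
- exact: sSE.
- rewrite -(setCK Z); apply: (implyP (R1E _)); exact: sSE.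
Qed.

Lemma cl_min (S : hyp) E : in_K r E -> S \subset E -> cl r S \subset E.
Proof.
move=> KE sSE; apply/subsetP => X; rewrite inE => /forallP /(_ E).
by rewrite KE sSE.
Qed.

Lemma sub_cl (S : hyp) : S \subset cl r S.
Proof.
apply/subsetP => X XS; rewrite inE; apply/forallP => E; apply/implyP.
by move=> /andP [_ /subsetP h]; exact: h.
Qed.

Lemma cl0_sub_cl (S : hyp) : cl0 r S \subset cl r S.
Proof.
apply/subsetP => X; rewrite !inE => /forallP h; apply/forallP => E.
apply/implyP => /andP [KE sE]; case/and3P: KE => a b _.
by move: (h E); rewrite /in_K0 a b sE.
Qed.

Lemma G_sub_cl0 (S : hyp) : G S \subset cl0 r S.
Proof.
apply/subsetP => X XG; rewrite inE; apply/forallP => E; apply/implyP.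
move=> /andP [KE sE]; exact: (subsetP (G_min KE sE)).
Qed.

Lemma cl0_min (S : hyp) E : in_K0 r E -> S \subset E -> cl0 r S \subset E.
Proof.
move=> KE sSE; apply/subsetP => X; rewrite inE => /forallP /(_ E).
by rewrite KE sSE.
Qed.

Lemma cl0E (S : hyp) : cl0 r S = G S.
Proof.
apply/eqP; rewrite eqEsubset G_sub_cl0 andbT.
exact: (cl0_min (G_K0 S) (sub_G S)).
Qed.

Lemma R2_cl (S : hyp) : R2 r (cl r S).
Proof.
apply/forallP => A; apply/forallP => B; apply/implyP => /and3P [hA hB hr].
rewrite inE; apply/forallP => E; apply/implyP => /andP [KE sE].
have sub := subsetP (cl_min KE sE).
case/and3P: KE => _ _ /forallP R2E.
move: (R2E A) => /forallP /(_ B) /implyP; apply.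
by rewrite (sub A hA) (sub B hB) hr.
Qed.

Lemma orthoP (S : hyp) : cl r S = cl0 r S <-> R2 r (G S).
Proof.
split.
- by move=> e; rewrite -cl0E -e; exact: R2_cl.
- move=> h; have KG : in_K r (G S).
    by case/andP: (G_K0 S) => a b; rewrite /in_K a b h.
  apply/eqP; rewrite eqEsubset cl0_sub_cl andbT cl0E.
  exact: cl_min KG (sub_G S).
Qed.

Lemma G2E X Y Z : (Z \in G [set X; Y]) = gm X Z || gm Y Z.
Proof.
rewrite inE !in_set2 /gm.
by case: (sm Z); case: (sm (~:Z)); case: (Z==X); case: (Z==Y); case: (~:Z==X); case: (~:Z==Y).
Qed.

Lemma G2_eq X Y a b : (forall Z, gm X Z = gm a Z) -> (forall Z, gm Y Z = gm b Z) ->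
  G [set X; Y] = G [set a; b].
Proof. by move=> hX hY; apply/setP => Z; rewrite !G2E hX hY. Qed.

Lemma nsm0 Z : sm Z = false -> (Z == set0) = false.
Proof. by move=> sZ; apply/eqP => e; move: sZ; rewrite e /sm cards0. Qed.

Lemma anchor (S : hyp) X : X \in G S ->
  exists2 a, (a \in S) || (a == set0) & forall Z, gm X Z = gm a Z.
Proof.
rewrite inE => /or4P [h|h|h|h].
- exists set0; first by rewrite eqxx orbT.
  move=> Z; rewrite /gm; case sZ: (sm Z) => //=; case sCZ: (sm (~: Z)) => //=.
  have -> : (Z == X) = false by apply/eqP => e; move: sZ; rewrite e h.
  have -> : (~: Z == X) = false by apply/eqP => e; move: sCZ; rewrite e h.
  by rewrite (nsm0 sZ) (nsm0 sCZ).
- exists set0; first by rewrite eqxx orbT.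
  move=> Z; rewrite /gm; case sZ: (sm Z) => //=; case sCZ: (sm (~: Z)) => //=.
  have -> : (Z == X) = false by apply/eqP => e; move: sCZ; rewrite e h.
  have -> : (~: Z == X) = false.
    by apply/eqP => e; move: sZ; rewrite -[Z]setCK e h.
  by rewrite (nsm0 sZ) (nsm0 sCZ).
- by exists X; rewrite ?h.
- exists (~: X); first by rewrite h.
  move=> Z; rewrite /gm.
  have e1 : (~:Z == ~:X) = (Z == X) := inj_eq (@setC_inj _) Z X.
  have e2 : (~:Z == X) = (Z == ~:X) by apply/eqP/eqP => [<-|->]; rewrite setCK.
  rewrite e1 e2.
  by case: (sm Z); case: (sm (~:Z)); case: (Z == X); case: (Z == ~:X).
Qed.

Lemma gm0 b Z : gm set0 Z || gm b Z = gm b Z.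
Proof.
rewrite /gm; case sZ: (sm Z) => //=; case sCZ: (sm (~: Z)) => //=.
by rewrite (nsm0 sZ) (nsm0 sCZ).
Qed.

Lemma R2F0 : R2 r (G [set set0; set0]).
Proof.
have key Z : (Z \in G [set set0; set0]) = sm Z || sm (~: Z).
  by rewrite G2E orbb /gm; case sZ: (sm Z) => //=; case sCZ: (sm (~: Z)) => //=;
     rewrite (nsm0 sZ) (nsm0 sCZ).
apply/forallP => U; apply/forallP => W; apply/implyP => /and3P [hU hW hr].
rewrite key setCU /sm; rewrite !key /sm in hU hW.
case/orP: hW => hW; last first.
  by rewrite (leq_trans (subset_leq_card (subsetIr _ _)) hW) orbT.
case/orP: hU => hU; last first.
  by rewrite (leq_trans (subset_leq_card (subsetIl _ _)) hU) orbT.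
have e : U :&: W == U by rewrite eqEcard subsetIl (leq_trans hU hr).
have sUW : U \subset W by apply/setIidPl/eqP.
by rewrite (setUidPr sUW) hW.
Qed.

Lemma G2_sub (S : hyp) a b : (a \in S) || (a == set0) -> (b \in S) || (b == set0) ->
  G [set a; b] \subset G S.
Proof.
move=> ha hb; apply: G_min (G_K0 S) _; apply/subsetP => z.
have mem c : (c \in S) || (c == set0) -> c \in G S.
  by rewrite inE => /orP [->|/eqP->]; rewrite ?orbT // /sm cards0.
by rewrite in_set2 => /orP [] /eqP ->; apply: mem.
Qed.
End Aux.

Theorem mainTheorem18 (n r : nat) (H : {set {set 'I_n}}) :
  cross_free r H <-> cross_free r (cl r H).
Proof.
split; last first.
  by move=> h A B hA hB; apply: h; exact: (subsetP (sub_cl r H)).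
move=> hH.
have anc a b : (a \in H) || (a == set0) -> (b \in H) || (b == set0) ->
    R2 r (G r [set a; b]).
  case/orP => [ha | /eqP ->]; case/orP => [hb | /eqP ->].
  - exact/orthoP/(hH a b ha hb).
  - rewrite (_ : G r [set a; set0] = G r [set a; a]); first exact/orthoP/(hH a a ha ha).
    by apply/setP => Z; rewrite !G2E orbb orbC gm0.
  - rewrite (_ : G r [set set0; b] = G r [set b; b]); first exact/orthoP/(hH b b hb hb).
    by apply/setP => Z; rewrite !G2E orbb gm0.
  - exact: R2F0.
have R2G : R2 r (G r H).
  apply/forallP => U; apply/forallP => W; apply/implyP => /and3P [hU hW hr].
  have [a ha ea] := anchor hU; have [b hb eb] := anchor hW.
  have e := G2_eq ea eb.
  apply: (subsetP (@G2_sub n r H a b ha hb)).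
  move: (anc a b ha hb) => /forallP /(_ U) /forallP /(_ W) /implyP; apply.
  by rewrite -e !(subsetP (sub_G _ _)) ?set21 ?set22 ?hr.
have KG : in_K r (G r H).
  by case/andP: (G_K0 r H) => x y; rewrite /in_K x y R2G.
have clG := subsetP (cl_min KG (sub_G r H)).
move=> X Y hX hY; apply/orthoP.
have [a ha ea] := anchor (clG _ hX); have [b hb eb] := anchor (clG _ hY).
by rewrite (G2_eq ea eb); exact: anc.
Qed.
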